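(* Let $F=C^\infty(]0,1[,\mathbb{R})$ with the Fr\'echet topology given by the seminorms $\|f\|_{n,k}=\sup_{\frac{1}{n+1}\le x\le\frac{n}{n+1}}|f^{(k)}(x)|$, $(n,k)\in\mathbb{N}^*\times\mathbb{N}$. Let $\mathcal{A}=\{f\in C^\infty(]0,1[,]0,1[)\mid \lim_{x\to1}f(x)=1,\ \lim_{x\to0}f(x)=0\}$ and $\mathcal{D}=\{f\in\mathcal{A}\mid \inf_{x\in]0,1[}f'(x)>0 \text{ and } \sup_{x\in]0,1[}f'(x)>0\}\subset F$. Let $P\in\mathbb{R}[x]$ with $P(0)=P(1)=0$, $0<P(x)<\min(x,1-x)$ on $]0,1[$ and $\sup_{]0,1[}|P'|<1$, let $\varphi(t,x)=\frac{P(x)t}{(1-P(x))t+P(x)}$ and $c_t(x)=x+\varphi(t,x)$ for $t\ge0$, $c_t(x)=x-\varphi(-t,x)$ for $t<0$. Then the path $t\mapsto c_t$ is of class $C^1$ from $]-1,1[$ to $\mathcal{D}$, and $\partial_t c_t|_{t=0}=\mathbf{1}$ is the constant function equal to $1$. *)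

(* Defs.v *)
From HB Require Import structures.
From mathcomp Require Import all_boot all_order all_algebra.
From mathcomp Require Import all_classical all_reals all_analysis.
Set Implicit Arguments. Unset Strict Implicit. Unset Printing Implicit Defensive.
Import Order.TTheory GRing.Theory Num.Theory.
Import numFieldNormedType.Exports.
Local Open Scope classical_set_scope.
Local Open Scope ring_scope.

Section Defs.
Variable R : realType.

(* Elements of F = C^oo(]0,1[, R) are represented by functions R -> R;
   only their values on ]0,1[ matter. *)
Definition smooth01 (f : R -> R) : Prop :=
  forall (k : nat) (x : R), 0 < x < 1 -> derivable (derive1n k f) x 1.

Definition seminorm (n k : nat) (f : R -> R) : \bar R :=
  ereal_sup [set (`|derive1n k f x|)%:E | x in
               `[(n.+1%:R)^-1, n%:R / n.+1%:R]%classic].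

Definition frechet_cvg {T : Type} (Fl : set_system T) (g : T -> R -> R)
    (l : R -> R) : Prop :=
  forall (n k : nat), (0 < n)%N ->
    seminorm n k (fun x => g t x - l x) @[t --> Fl] --> (0 : \bar R)%E.

Definition setA01 : set (R -> R) := fun f =>
  [/\ smooth01 f,
      (forall x, 0 < x < 1 -> 0 < f x < 1),
      f x @[x --> (1:R)^'-] --> (1:R) &
      f x @[x --> (0:R)^'+] --> (0:R)].

Definition open01 : set R := `](0:R), (1:R)[%classic.

Definition setD01 : set (R -> R) := fun f =>
  [/\ setA01 f,
      (0 < ereal_inf [set (derive1 f x)%:E | x in open01])%E &
      (0 < ereal_sup [set (derive1 f x)%:E | x in open01])%E].

Definition phi (P : {poly R}) (t x : R) : R :=
  P.[x] * t / ((1 - P.[x]) * t + P.[x]).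

Definition cpath (P : {poly R}) (t : R) : R -> R := fun x =>
  if 0 <= t then x + phi P t x else x - phi P (- t) x.

Definition C1_path_F (c c' : R -> R -> R) : Prop :=
  [/\ (forall t : R, -1 < t < 1 -> smooth01 (c' t)),
      (forall t0 : R, -1 < t0 < 1 ->
         frechet_cvg (0 : R)^' (fun h => fun x => (c (t0 + h) x - c t0 x) / h)
                     (c' t0)) &
      (forall t0 : R, -1 < t0 < 1 -> frechet_cvg (nbhs t0) c' (c' t0))].

End Defs.

(* Main.v *)
Require Import Defs.
From HB Require Import structures.
From mathcomp Require Import all_boot all_order all_algebra.
From mathcomp Require Import all_classical all_reals all_analysis.
From mathcomp Require Import ring lra.
Import Order.TTheory GRing.Theory Num.Theory.
Import numFieldNormedType.Exports.
Local Open Scope classical_set_scope.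
Local Open Scope ring_scope.

Set Implicit Arguments. Unset Strict Implicit. Unset Printing Implicit Defensive.
Section Terms.
Variable R : realType.
Variable P : {poly R}.
Hypothesis HP : forall x : R, 0 < x < 1 -> 0 < P.[x] < 1.
Variable T : Type.

Lemma smulE (a b : R) : a *: b = a * b. Proof. by []. Qed.

Definition Dp (p x : R) : R := p + (1 - p) * P.[x].

Record term := Term { tc : T -> R; tq : {poly R}; tps : seq (T -> R) }.

Definition prodD (ps : seq (T -> R)) (t : T) (x : R) : R :=
  \prod_(p <- ps) Dp (p t) x.
Definition evt (tm : term) (t : T) (x : R) : R :=
  tc tm t * (tq tm).[x] / prodD (tps tm) t x.
Definition ev (L : seq term) (t : T) (x : R) : R := \sum_(tm <- L) evt tm t x.

Definition dterm (tm : term) : seq term :=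
  Term (tc tm) (tq tm)^`() (tps tm) ::
  map (fun p => Term (fun t => - (1 - p t) * tc tm t) (tq tm * P^`()) (p :: tps tm))
      (tps tm).
Definition dL (L : seq term) : seq term := flatten (map dterm L).

Definition okps (t : T) (ps : seq (T -> R)) : bool := all (fun p => 0 <= p t <= 1) ps.
Definition okL (t : T) (L : seq term) : bool := all (fun tm => okps t (tps tm)) L.

Lemma all_andb (U : Type) (Q : pred U) (b : bool) (s : seq U) :
  all Q s -> b -> all (fun p => Q p && b) s.
Proof. by move=> + hb; elim: s => //= a s IH /andP[-> /IH ->]; rewrite hb. Qed.

Lemma okL_dL t L : okL t L -> okL t (dL L).
Proof.
elim: L => // tm L IH /andP[h1 h2].
have -> : dL (tm :: L) = dterm tm ++ dL L by [].
rewrite /okL all_cat -/(okL t (dL L)) IH // andbT /dterm /= h1 /= all_map.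
exact: all_andb.
Qed.

Lemma Dp_gt0 p x : 0 <= p <= 1 -> 0 < x < 1 -> 0 < Dp p x.
Proof.
move=> /andP[p0 p1] /HP /andP[u0 u1]; rewrite /Dp.
have : 0 <= p * (1 - P.[x]) by rewrite mulr_ge0 // subr_ge0 ltW.
nra.
Qed.

Lemma Dp_ge p x : 0 <= p <= 1 -> 0 < x < 1 -> P.[x] <= Dp p x.
Proof.
move=> /andP[p0 p1] /HP /andP[u0 u1]; rewrite /Dp.
have : 0 <= p * (1 - P.[x]) by rewrite mulr_ge0 // subr_ge0 ltW.
nra.
Qed.

Lemma prodD_gt0 t ps x : okps t ps -> 0 < x < 1 -> 0 < prodD ps t x.
Proof.
move=> + hx; elim: ps => [|p ps IH]; first by rewrite /prodD big_nil.
by rewrite /prodD big_cons /= => /andP[hp /IH h]; rewrite mulr_gt0 // Dp_gt0.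
Qed.

Lemma is_derive_Dp (p x : R) : is_derive x (1:R) (Dp p) ((1 - p) * P^`().[x]).
Proof. by rewrite /Dp; apply: is_derive_eq; rewrite add0r mul1r. Qed.

Lemma is_derive_inv (f : R -> R) (x df : R) : f x != 0 -> is_derive x (1:R) f df ->
  is_derive x (1:R) (fun y => (f y)^-1) (- df / (f x * f x)).
Proof.
move=> fx0 [fd <-]; apply: DeriveDef; first exact: derivableV.
by rewrite deriveV // expr2 invfM /= mulrC [in RHS]mulNr mulrA; rewrite /GRing.scale /=; ring.
Qed.

Lemma is_derive_invprod t ps (x : R) : okps t ps -> 0 < x < 1 ->
  is_derive x (1:R) (fun y => (prodD ps t y)^-1)
    (\sum_(p <- ps) (- (1 - p t) * P^`().[x]) / (Dp (p t) x * prodD ps t x)).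
Proof.
move=> + hx; elim: ps => [|p ps IH].
  move=> _; rewrite big_nil /prodD.
  have -> : (fun y => (\prod_(p <- [::]) Dp (p t) y)^-1) = cst 1.
    by apply/funext => y; rewrite big_nil invr1.
  exact: is_derive_cst.
rewrite /okps /= => /andP[hp hps].
have hpos := prodD_gt0 hps hx.
have hD := Dp_gt0 hp hx.
have -> : (fun y => (prodD (p :: ps) t y)^-1) =
    (fun y => (Dp (p t) y)^-1) * (fun y => (prodD ps t y)^-1).
  by apply/funext => y; rewrite /prodD big_cons invfM.
apply: is_derive_eq.
  apply: is_deriveM; last exact: IH.
  by apply: is_derive_inv; exact: lt0r_neq0.
have hP0 : prodD ps t x != 0 by exact: lt0r_neq0.
have hD0 : Dp (p t) x != 0 by exact: lt0r_neq0.
rewrite big_cons {3}/prodD big_cons -/(prodD ps t x) /GRing.scale /=.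
rewrite addrC; congr (_ + _); first by field; rewrite hD0 hP0.
rewrite mulr_sumr; apply: eq_bigr => q _.
by rewrite /prodD big_cons -/(prodD ps t x) !invfM; ring.
Qed.

Lemma is_derive_evt tm t (x : R) : okps t (tps tm) -> 0 < x < 1 ->
  is_derive x (1:R) (evt tm t) (ev (dterm tm) t x).
Proof.
move=> hok hx.
have -> : evt tm t = (fun y => tc tm t * (tq tm).[y]) * (fun y => (prodD (tps tm) t y)^-1).
  by apply/funext => y; rewrite /evt.
apply: is_derive_eq.
  apply: is_deriveM; last exact: is_derive_invprod.
rewrite /ev /dterm big_cons big_map /evt !smulE mulr_sumr.
rewrite addrC; congr (_ + _); first by rewrite mulrC.
apply: eq_bigr => p _ /=; rewrite /prodD big_cons -/(prodD (tps tm) t x) !invfM hornerM; ring.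
Qed.

Lemma ev_cons tm L t : ev (tm :: L) t = evt tm t + ev L t.
Proof. by apply/funext => y; rewrite /ev big_cons. Qed.

Lemma ev_cat L1 L2 t (x : R) : ev (L1 ++ L2) t x = ev L1 t x + ev L2 t x.
Proof. by rewrite /ev big_cat. Qed.

Lemma is_derive_ev L t (x : R) : okL t L -> 0 < x < 1 ->
  is_derive x (1:R) (ev L t) (ev (dL L) t x).
Proof.
move=> + hx; elim: L => [|tm L IH].
  move=> _; have -> : ev [::] t = cst 0 by apply/funext => y; rewrite /ev big_nil.
  exact: is_derive_cst.
move=> /andP[h1 h2]; rewrite ev_cons.
have -> : dL (tm :: L) = dterm tm ++ dL L by [].
rewrite ev_cat; apply: is_deriveD; last exact: IH.
exact: is_derive_evt.
Qed.

Lemma near01 (x : R) : 0 < x < 1 -> \forall y \near x, 0 < y < 1.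
Proof.
move=> hx; have := @near_in_itvoo R 0 1 x; rewrite in_itv /= => /(_ hx).
by apply: filterS => y; rewrite in_itv.
Qed.

Lemma okL_iter k t L : okL t L -> okL t (iter k dL L).
Proof. by move=> h; elim: k => //= k IH; exact: okL_dL. Qed.

Lemma derive1n_ev k L t : okL t L -> forall x : R, 0 < x < 1 ->
  derive1n k (ev L t) x = ev (iter k dL L) t x.
Proof.
move=> hok; elim: k => [|k IH] x hx; first by [].
rewrite derive1nS derive1E /=.
rewrite (@near_eq_derive _ _ _ _ (ev (iter k dL L) t)).
  by apply: derive_val; apply: is_derive_ev => //; exact: okL_iter.
by move: (near01 hx); apply: filterS => y hy; exact: IH.
Qed.

Lemma derivable_ev k L t (x : R) : okL t L -> 0 < x < 1 ->
  derivable (derive1n k (ev L t)) x 1.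
Proof.
move=> hok hx.
apply: (@near_eq_derivable _ _ _ (ev (iter k dL L) t)).
  by move: (near01 hx); apply: filterS => y hy; rewrite derive1n_ev.
have := is_derive_ev (okL_iter k hok) hx; case=> //.
Qed.

End Terms.

Set Implicit Arguments. Unset Strict Implicit. Unset Printing Implicit Defensive.

Lemma eq01_derive1n (R : realType) (f g : R -> R) :
  (forall x, 0 < x < 1 -> f x = g x) ->
  forall k x, 0 < x < 1 -> derive1n k f x = derive1n k g x.
Proof.
move=> hfg; elim=> [|k IH] x hx; first exact: hfg.
rewrite !derive1nS !derive1E; apply: near_eq_derive.
by move: (near01 hx); apply: filterS => y hy; exact: IH.
Qed.

Lemma poly_bound (R : realType) (q : {poly R}) :
  exists M : R, forall x, 0 <= x <= 1 -> `|q.[x]| <= M.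
Proof.
elim/poly_ind: q => [|q c [M HM]]; first by exists 0 => x _; rewrite horner0 normr0.
exists (`|M| + `|c|) => x hx; rewrite hornerMXaddC.
apply: (le_trans (ler_normD _ _)); apply: lerD => //.
rewrite normrM; have h1 := HM x hx.
have h2 : `|x| <= 1 by case/andP: hx => h0 h1'; rewrite ger0_norm.
have h3 := normr_ge0 (q.[x]); have h4 := ler_norm M; have h5 := normr_ge0 x.
nra.
Qed.

Section Bounds.
Variable R : realType.
Variable P : {poly R}.
Hypothesis HP : forall x : R, 0 < x < 1 -> 0 < P.[x] < 1.
Variable T : Type.
Variable F : set_system T.
Context {FF : Filter F}.
Variable K : set R.
Variable m : R.
Hypothesis m0 : 0 < m.
Hypothesis hK : forall x, K x -> 0 < x < 1 /\ m <= P.[x].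

Lemma prodD_ge (t : T) (ps : seq (T -> R)) (x : R) : okps t ps -> K x -> m ^+ size ps <= prodD P ps t x.
Proof.
move=> + /hK [hx hm]; elim: ps => [|p ps IH]; first by rewrite /prodD big_nil expr0.
rewrite /prodD big_cons /= exprS => /andP[hp /IH h].
apply: ler_pM => //; first exact: ltW.
  by rewrite exprn_ge0 // ltW.
exact: (le_trans hm (Dp_ge HP hp hx)).
Qed.

Lemma evt_bound (tm : term R T) : exists B : R, forall t x, okps t (tps tm) -> K x ->
  `|evt P tm t x| <= `|tc tm t| * B.
Proof.
have [M HM] := poly_bound (tq tm).
exists (M / m ^+ size (tps tm)) => t x hok hx.
have [hx01 _] := hK hx.
have hpos := prodD_gt0 HP hok hx01.
have hge := prodD_ge hok hx.
have hms : 0 < m ^+ size (tps tm) by rewrite exprn_gt0.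
rewrite /evt normrM normfV (gtr0_norm hpos) normrM -mulrA.
apply: ler_wpM2l => //.
apply: ler_pM => //.
- by rewrite invr_ge0 ltW.
- by apply: HM; case/andP: hx01 => h0 h1; rewrite !ltW.
- by rewrite lef_pV2 // posrE.
Qed.

Fixpoint smallL (L : seq (term R T)) : Prop :=
  if L is tm :: L' then
    [/\ tc tm @ F --> (0:R), List.Forall (fun p : T -> R => cvg (p @ F)) (tps tm) & smallL L']
  else True.

Lemma smallL_cat L1 L2 : smallL L1 -> smallL L2 -> smallL (L1 ++ L2).
Proof. by elim: L1 => //= tm L1 IH [h1 h2 h3] h; split => //; exact: IH. Qed.

Lemma smallL_map (c : T -> R) (q : {poly R}) (ps ps0 : seq (T -> R)) :
  c @ F --> (0:R) -> List.Forall (fun p : T -> R => cvg (p @ F)) ps ->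
  List.Forall (fun p : T -> R => cvg (p @ F)) ps0 ->
  smallL (map (fun p => Term (fun t => - (1 - p t) * c t) q (p :: ps0)) ps).
Proof.
move=> hc; elim: ps => // p ps IH hps hps0.
inversion hps as [|a b hp hps']; subst.
split; last exact: IH.
- have := cvgM (cvgN (cvgB (cvg_cst (1:R)) hp)) hc.
  by move/(_ FF FF FF FF); rewrite mulr0.
- by constructor.
Qed.

Lemma smallL_dL L : smallL L -> smallL (dL P L).
Proof.
elim: L => // tm L IH [h1 h2 h3].
have -> : dL P (tm :: L) = dterm P tm ++ dL P L by [].
apply: smallL_cat; last exact: IH.
by split => //; apply: smallL_map.
Qed.

Lemma smallL_iter k L : smallL L -> smallL (iter k (@dL _ P T) L).
Proof. by move=> h; elim: k => //= k IH; exact: smallL_dL. Qed.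

Lemma ev_small L : smallL L -> exists S : T -> R, S @ F --> (0:R) /\
  forall t x, okL t L -> K x -> `|ev P L t x| <= S t.
Proof.
elim: L => [_|tm L IH [h1 h2 /IH [S [hS1 hS2]]]].
  exists (fun=> 0); split; first exact: cvg_cst.
  by move=> t x _ _; rewrite /ev big_nil normr0.
have [B HB] := evt_bound tm.
exists (fun t => `|tc tm t| * B + S t); split.
  have H : (fun t => `|tc tm t| * B + S t) @ F --> (`|0:R| * B + 0) :=
    cvgD (cvgM (cvg_norm h1) (cvg_cst B)) hS1.
  by move: H => /(_ FF FF FF FF); rewrite normr0 mul0r add0r.
move=> t x /andP[ok1 ok2] hx; rewrite ev_cons.
apply: (le_trans (ler_normD _ _)); apply: lerD; [exact: HB | exact: hS2].
Qed.

End Bounds.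

Lemma Kn_facts (R : realType) (n : nat) : (0 < n)%N ->
  ((n.+1%:R : R)^-1 <= n%:R / n.+1%:R) /\
  forall x : R, x \in `[(n.+1%:R)^-1, n%:R / n.+1%:R] -> 0 < x < 1.
Proof.
move=> n0; have hn1 : (0 : R) < n.+1%:R by rewrite ltr0n.
split.
  rewrite -[X in X <= _]mul1r; apply: ler_wpM2r; first by rewrite invr_ge0 ltW.
  by rewrite ler1n.
move=> x; rewrite in_itv /= => /andP[h1 h2]; apply/andP; split.
  by apply: lt_le_trans h1; rewrite invr_gt0.
have hb : n%:R / n.+1%:R < (1:R) by rewrite ltr_pdivrMr // mul1r ltr_nat.
exact: le_lt_trans h2 hb.
Qed.

Lemma frechet_ev (R : realType) (P : {poly R})
  (HP : forall x : R, 0 < x < 1 -> 0 < P.[x] < 1)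
  (T : Type) (F : set_system T) {FF : Filter F}
  (g : T -> R -> R) (l : R -> R) (L : seq (term R T)) :
  smallL F L ->
  (\forall t \near F, okL t L /\ forall x, 0 < x < 1 -> g t x - l x = ev P L t x) ->
  frechet_cvg F g l.
Proof.
move=> hs hev n k n0.
have [hab K01] := Kn_facts R n0.
set a := (n.+1%:R : R)^-1 in hab K01 *; set b := (n%:R / n.+1%:R : R) in hab K01 *.
have [c hc hcm] := EVT_min hab (continuous_subspaceT (@continuous_horner R P)).
have m0 : 0 < P.[c] by case/andP: (HP _ (K01 c hc)).
have hK : forall x, `[a, b]%classic x -> 0 < x < 1 /\ P.[c] <= P.[x].
  by move=> x hx; split; [exact: K01 | exact: hcm].
have [S [hS hSb]] := ev_small HP m0 hK (smallL_iter P k hs).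
apply: (@squeeze_cvge _ _ _ _ (fun=> 0%E) _ (fun t => (S t)%:E) _ 0%E).
- near=> t; have /(_ _)[//|hok heq] := near hev t.
  apply/andP; split.
    apply: le_ereal_sup_tmp; exists (`|derive1n k (fun x => g t x - l x) a|)%:E.
      by exists a => //=; rewrite in_itv /= lexx hab.
    by rewrite lee_fin.
  apply/ereal_supP => _ [x hx <-]; rewrite lee_fin.
  rewrite (eq01_derive1n heq k (K01 x hx)) (derive1n_ev HP) //; last exact: K01.
  by apply: hSb => //; exact: okL_iter.
- exact: cvg_cst.
- by apply: cvg_EFin => //; near=> t.
Unshelve. all: by end_near.
Qed.

Set Implicit Arguments. Unset Strict Implicit. Unset Printing Implicit Defensive.

Section Main.
Variable R : realType.
Variable P : {poly R}.
Hypothesis HP : forall x : R, 0 < x < 1 -> 0 < P.[x] < 1.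
Hypothesis HPx : forall x : R, 0 < x < 1 -> P.[x] < x /\ P.[x] < 1 - x.
Variable r : R.
Hypothesis r1 : r < 1.
Hypothesis hr : forall x : R, 0 < x < 1 -> `|P^`().[x]| <= r.

Lemma ev_nil (t x : R) : ev P [::] t x = 0.
Proof. by rewrite /ev big_nil. Qed.
Lemma ev_cons' (tm : term R R) L (t x : R) : ev P (tm :: L) t x = evt P tm t x + ev P L t x.
Proof. by rewrite /ev big_cons. Qed.
Lemma evt_Term (c : R -> R) q ps (t x : R) : evt P (Term c q ps) t x = c t * q.[x] / prodD P ps t x.
Proof. by []. Qed.
Lemma prodD_nil (t x : R) : prodD P [::] t x = 1.
Proof. by rewrite /prodD big_nil. Qed.
Lemma prodD_cons (p : R -> R) ps (t x : R) : prodD P (p :: ps) t x = Dp P (p t) x * prodD P ps t x.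
Proof. by rewrite /prodD big_cons. Qed.

Lemma cpathE (t x : R) : cpath P t x = x + t * P.[x] / Dp P `|t| x.
Proof.
rewrite /cpath /phi /Dp; case: ifP => h.
  rewrite ger0_norm //.
  have -> : (1 - P.[x]) * t + P.[x] = t + (1 - t) * P.[x] by ring.
  by rewrite [P.[x] * t]mulrC.
have ht : t < 0 by rewrite ltNge h.
rewrite ltr0_norm //.
have -> : (1 - P.[x]) * - t + P.[x] = - t + (1 - - t) * P.[x] by ring.
ring.
Qed.

Definition L1 : seq (term R R) :=
  [:: Term (fun _ : R => 1) 'X [::]; Term (fun t : R => t) P [:: fun t : R => `|t|]].

Lemma L1E (t : R) : cpath P t = ev P L1 t.
Proof.
apply/funext => x; rewrite cpathE /ev !big_cons big_nil /evt /prodD /=.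
rewrite !big_cons !big_nil hornerX.
by rewrite invr1 !mulr1 mul1r addr0.
Qed.

Lemma okL1 (t : R) : -1 < t < 1 -> okL t L1.
Proof.
move=> /andP[h1 h2]; rewrite /okL /okps /= normr_ge0 /= andbT.
by rewrite ltW // ltr_norml h1 h2.
Qed.

Lemma phi_bound (t x : R) : `|t| <= 1 -> 0 < x < 1 ->
  `|t * P.[x] / Dp P `|t| x| <= P.[x].
Proof.
move=> ht hx; have /andP[u0 u1] := HP hx.
have hD : 0 < Dp P `|t| x by apply: Dp_gt0 => //; rewrite normr_ge0.
rewrite normrM normfV (gtr0_norm hD) normrM (gtr0_norm u0) ler_pdivrMr //.
have := normr_ge0 t; rewrite /Dp; nra.
Qed.

Lemma dcE (t x : R) : -1 < t < 1 -> 0 < x < 1 ->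
  derive1 (cpath P t) x = 1 + t * `|t| * P^`().[x] / (Dp P `|t| x ^+ 2).
Proof.
move=> ht hx; rewrite L1E -derive1n1 (derive1n_ev HP 1 (okL1 ht) hx).
have hD : 0 < Dp P `|t| x by apply: Dp_gt0 => //; rewrite normr_ge0 ltW // ltr_norml.
rewrite /= /ev !big_cons big_nil /evt /prodD /= !big_cons !big_nil.
rewrite derivX hornerM hornerC.
move: hD; rewrite /Dp => hD.
field; by rewrite lt0r_neq0.
Qed.


Lemma cpath_D01 (t : R) : -1 < t < 1 -> setD01 (cpath P t).
Proof.
move=> ht.
have hat : `|t| <= 1 by rewrite ltW // ltr_norml.
have cbd : forall x, 0 < x < 1 -> x - P.[x] <= cpath P t x <= x + P.[x].
  move=> x hx; rewrite cpathE; have := phi_bound hat hx; rewrite ler_norml.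
  by move=> /andP[h1 h2]; apply/andP; split; lra.
have hd : forall x, 0 < x < 1 -> 1 - r <= derive1 (cpath P t) x.
  move=> x hx; rewrite dcE //.
  have hD : 0 < Dp P `|t| x by apply: Dp_gt0 => //; rewrite normr_ge0.
  have hDa : `|t| <= Dp P `|t| x.
    have /andP[u0 u1] := HP hx; have := normr_ge0 t; rewrite /Dp; nra.
  set u := P^`().[x]; set d := Dp P `|t| x.
  have hu := hr hx.
  have : `|t * `|t| * u / d ^+ 2| <= r.
    rewrite normrM normfV normrX (gtr0_norm hD) !normrM normr_id ler_pdivrMr ?exprn_gt0 //.
    rewrite expr2 [r * _]mulrC; apply: ler_pM => //.
    by apply: ler_pM.
  rewrite ler_norml => /andP[h1 _]; lra.
split; [split| |].
- move=> k x hx; rewrite L1E; have := derivable_ev HP (okL1 ht) hx; exact.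
- move=> x hx; have /andP[h1 h2] := cbd x hx; have [h3 h4] := HPx hx.
  apply/andP; split; lra.
- apply: (@squeeze_cvgr _ _ _ _ (fun x => 2 * x - 1) (fun=> 1)).
  + near=> x.
    have hx : 0 < x < 1 by apply/andP; split; near: x;
      [apply: nbhs_left_gt; exact: ltr01 | exact: nbhs_left_lt].
    have /andP[h1 h2] := cbd x hx; have [h3 h4] := HPx hx.
    apply/andP; split; lra.
  + apply: cvg_at_left_filter.
    have e : (1:R) = 2 * 1 - 1 by ring.
    rewrite [X in _ --> X]e.
    by apply: cvgB; [apply: cvgM; [exact: cvg_cst | exact: cvg_id] | exact: cvg_cst].
  + exact: cvg_cst.
- apply: (@squeeze_cvgr _ _ _ _ (fun=> 0) (fun x => 2 * x)).
  + near=> x.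
    have hx : 0 < x < 1 by apply/andP; split; near: x;
      [exact: nbhs_right_gt | apply: nbhs_right_lt; exact: ltr01].
    have /andP[h1 h2] := cbd x hx; have [h3 h4] := HPx hx.
    apply/andP; split; lra.
  + exact: cvg_cst.
  + apply: cvg_at_right_filter.
    rewrite -[X in _ --> X](mulr0 (2:R)).
    by apply: cvgM; [exact: cvg_cst | exact: cvg_id].
- apply: (@lt_le_trans _ _ (1 - r)%:E); first by rewrite lte_fin subr_gt0.
  apply/ereal_infP => _ [x hx <-]; rewrite lee_fin; apply: hd.
  by move: hx; rewrite /open01 /= in_itv.
- apply: (@lt_le_trans _ _ (derive1 (cpath P t) (2^-1))%:E).
    rewrite lte_fin; apply: (lt_le_trans _ (hd _ _)); first by rewrite subr_gt0.
    by apply/andP; split; [rewrite invr_gt0 | rewrite invf_lt1 // ltr1n].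
  apply: ereal_sup_ubound; exists (2^-1) => //.
  by rewrite /open01 /= in_itv /=; apply/andP; split; [rewrite invr_gt0 | rewrite invf_lt1 // ltr1n].
Unshelve. all: by end_near.
Qed.


Definition cd (t x : R) : R := P.[x] * P.[x] / (Dp P `|t| x * Dp P `|t| x).

Definition L2 : seq (term R R) :=
  [:: Term (fun _ : R => 1) (P * P) [:: fun t : R => `|t|; fun t : R => `|t|]].

Lemma L2E (t : R) : cd t = ev P L2 t.
Proof.
apply/funext => x; rewrite /cd /ev !big_cons big_nil /evt /prodD /=.
by rewrite !big_cons !big_nil hornerM mul1r addr0 mulr1.
Qed.

Lemma cd_smooth (t : R) : -1 < t < 1 -> smooth01 (cd t).
Proof.
move=> /andP[h1 h2] k x hx; rewrite L2E.
have ok : okL t L2.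
  by rewrite /okL /okps /= normr_ge0 /= ltW // ltr_norml h1 h2.
have := derivable_ev HP ok hx; exact.
Qed.

Lemma cd0 (x : R) : 0 < x < 1 -> cd 0 x = 1.
Proof.
move=> hx; have /andP[u0 _] := HP hx.
rewrite /cd /Dp normr0 add0r subr0 mul1r divff //.
by rewrite mulf_neq0 // lt0r_neq0.
Qed.

Definition qq : {poly R} := P * P * (1 - P).

Lemma Dpos (a x : R) : `|a| < 1 -> 0 < x < 1 -> 0 < `|a| + (1 - `|a|) * P.[x].
Proof. by move=> ha hx; apply: (Dp_gt0 HP) => //; rewrite normr_ge0 ltW. Qed.

Lemma cd_cont (t0 : R) : -1 < t0 < 1 -> frechet_cvg (nbhs t0) cd (cd t0).
Proof.
move=> /andP[h1 h2].
have ha0 : `|t0| < 1 by rewrite ltr_norml h1 h2.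
have cn : (fun t : R => `|t|) @ t0 --> `|t0| by exact: cvg_norm.
have cc : (fun t : R => `|t0| - `|t|) @ t0 --> (0:R).
  rewrite -[X in _ --> X](subrr `|t0|).
  by apply: cvgB => //; exact: cvg_cst.
apply: (@frechet_ev _ _ HP _ _ _ _ _
  [:: Term (fun t : R => `|t0| - `|t|) qq [:: fun _ : R => `|t0|; fun t : R => `|t|; fun t : R => `|t|];
      Term (fun t : R => `|t0| - `|t|) qq [:: fun _ : R => `|t0|; fun _ : R => `|t0|; fun t : R => `|t|]]).
  split => //; last split => //.
    by repeat constructor; apply: cvgP; [exact: cvg_cst | exact: cn | exact: cn].
  by repeat constructor; apply: cvgP; [exact: cvg_cst | exact: cvg_cst | exact: cn].
near=> t.
have ht : `|t| < 1 by near: t; exact: (cvgr_lt _ cn _ ha0).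
split.
  by rewrite /okL /okps /= !normr_ge0 /= !ltW.
move=> x hx.
rewrite /cd !ev_cons' ev_nil !evt_Term !prodD_cons prodD_nil.
rewrite /qq !hornerM hornerD hornerN hornerC addr0 mulr1.
have hDa := Dpos ha0 hx; have hDb := Dpos ht hx.
rewrite /Dp; field.
by rewrite !lt0r_neq0.
Unshelve. all: by end_near.
Qed.

Lemma dq_cvg (t0 : R) : -1 < t0 < 1 ->
  frechet_cvg (0:R)^' (fun h x => (cpath P (t0 + h) x - cpath P t0 x) / h) (cd t0).
Proof.
move=> /andP[h1 h2].
have ha0 : `|t0| < 1 by rewrite ltr_norml h1 h2.
have ch : (fun h : R => t0 + h) @ (0:R)^' --> t0.
  rewrite -[X in _ --> X](addr0 t0).
  by apply: cvgD; [exact: cvg_cst | exact: cvg_within].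
have cn : (fun h : R => `|t0 + h|) @ (0:R)^' --> `|t0| by exact: cvg_norm.
have cc : (fun h : R => `|t0| - `|t0 + h|) @ (0:R)^' --> (0:R).
  rewrite -[X in _ --> X](subrr `|t0|).
  by apply: cvgB => //; exact: cvg_cst.
apply: (@frechet_ev _ _ HP _ _ _ _ _
  [:: Term (fun h : R => `|t0| - `|t0 + h|) qq
        [:: fun _ : R => `|t0|; fun h : R => `|t0 + h|; fun _ : R => `|t0|]]).
  split => //.
  by repeat constructor; apply: cvgP; [exact: cvg_cst | exact: cn | exact: cvg_cst].
have hsign : \forall h \near (0:R)^', (0 <= t0 /\ 0 <= t0 + h) \/ (t0 <= 0 /\ t0 + h <= 0).
  case: (ltgtP t0 0) => ht0.
  - by near=> h; right; split => //; apply: ltW; near: h; exact: (cvgr_lt _ ch _ ht0).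
  - by near=> h; left; split => //; apply: ltW; near: h; exact: (cvgr_gt _ ch _ ht0).   - near=> h; rewrite ht0 add0r; case: (leP 0 h) => hh; [left | right]; split => //.
    exact: (ltW hh).
near=> h.
have hb : `|t0 + h| < 1 by near: h; exact: (cvgr_lt _ cn _ ha0).
have hh : h != 0 by near: h; exact: nbhs_dnbhs_neq.
have hs : (0 <= t0 /\ 0 <= t0 + h) \/ (t0 <= 0 /\ t0 + h <= 0) by near: h; exact: hsign.
split.
  by rewrite /okL /okps /= !normr_ge0 /= !ltW.
move=> x hx.
rewrite /cd !ev_cons' ev_nil !evt_Term !prodD_cons prodD_nil !cpathE.
rewrite /qq !hornerM hornerD hornerN hornerC addr0 mulr1.
have hDa := Dpos ha0 hx; have hDb := Dpos hb hx.
move: hDa hDb; rewrite /Dp.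
case: hs => [[e1 e2]|[e1 e2]].
  rewrite (ger0_norm e1) (ger0_norm e2) => hDa hDb.
  field; by rewrite hh !lt0r_neq0.
rewrite (ler0_norm e1) (ler0_norm e2) => hDa hDb.
field; by rewrite hh !lt0r_neq0.
Unshelve. all: by end_near.
Qed.

End Main.

Unset Implicit Arguments.

Theorem theorem8p2 (R : realType) (P : {poly R})
  (P0 : P.[0] = 0) (P1 : P.[1] = 0)
  (Pbnd : forall x : R, 0 < x < 1 -> 0 < P.[x] < Num.min x (1 - x))
  (P'bnd : (ereal_sup [set (`|(P^`()).[x]|)%:E | x in @open01 R] < 1)%E) :
  (forall t : R, -1 < t < 1 -> setD01 (cpath P t)) /\
  exists c' : R -> R -> R,
    C1_path_F (cpath P) c' /\ (forall x : R, 0 < x < 1 -> c' 0 x = 1).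
Proof.
have HPx : forall x : R, 0 < x < 1 -> P.[x] < x /\ P.[x] < 1 - x.
  by move=> x hx; have /andP[_] := Pbnd x hx; rewrite lt_min => /andP[h1 h2].
have HP : forall x : R, 0 < x < 1 -> 0 < P.[x] < 1.
  move=> x hx; have /andP[h0 _] := Pbnd x hx; have [h1 h2] := HPx x hx.
  by rewrite h0 /=; case/andP: hx => hx0 hx1; lra.
have [r [r1 hr]] : exists r : R, r < 1 /\ forall x, 0 < x < 1 -> `|P^`().[x]| <= r.
  set S := ereal_sup _ in P'bnd.
  have hub : forall x : R, 0 < x < 1 -> ((`|P^`().[x]|)%:E <= S)%E.
    by move=> x hx; apply: ereal_sup_ubound; exists x => //; rewrite /open01 /= in_itv.
  move: P'bnd hub; case: S => [s| |] // hs hub.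
    exists s; split; first by rewrite lte_fin in hs.
    by move=> x hx; rewrite -lee_fin hub.
  exists 0; split => // x hx; have := hub x hx.
  by rewrite leeNy_eq.
split.
  by move=> t ht; exact: (cpath_D01 HP HPx r1 hr ht).
exists (cd P); split; last by move=> x hx; exact: (cd0 HP hx).
split.
- by move=> t ht; exact: (cd_smooth HP ht).
- by move=> t0 ht0; exact: (dq_cvg HP ht0).
- by move=> t0 ht0; exact: (cd_cont HP ht0).
Qed.
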